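(* Consider the upper-bound type system, and assume the program is well-typed w.r.t. the signature $\Sigma$ in that system. If $\models E:\Gamma$, $E\vdash e\Downarrow v$, and $\Sigma;\Gamma\vdash^{q}_{q'}e:A$ is derivable in the upper-bound type system, then for all $p,r\in\mathbb Q_{\ge0}$ with $p\ge q+\Phi_E(\Gamma)+r$ there exists $p'\in\mathbb Q_{\ge0}$ such that $E\vdash^{p}_{p'}e\Downarrow v$ and $p'\ge q'+\Phi(v:A)+r$.
   Context: Base types: $T ::= \mathsf{unit}\mid\mathsf{bool}\mid\mathsf{int}\mid L(T)\mid T*T$. Values: $v ::= () \mid \mathsf{true}\mid\mathsf{false}\mid n\ (n\in\mathbb Z)\mid [v_1,\dots,v_n]\ (n\ge 0$, the empty list being $\mathsf{nil})\mid (v_1,v_2)$. Value typing $\models v:T$: $()$ has type $\mathsf{unit}$, booleans have type $\mathsf{bool}$, integers have type $\mathsf{int}$, $(v_1,v_2):T_1*T_2$ if $\models v_i:T_i$, and $[v_1,\dots,v_n]:L(T)$ if every $\models v_i:T$ (so $\mathsf{nil}$ has every list type). Expressions (let-normal form; $x,x_i$ are variables, $f$ function identifiers): $e ::= () \mid \mathsf{true}\mid \mathsf{false}\mid n\mid x\mid \mathrm{op}_\diamond(x_1,x_2)\mid \mathrm{app}(f,x)\mid \mathrm{if}(x,e_t,e_f)\mid \mathrm{let}(x,e_1,x.e_2)\mid \mathrm{pair}(x_1,x_2)\mid \mathrm{match}(x,(x_1,x_2).e)\mid \mathsf{nil}\mid \mathrm{cons}(x_1,x_2)\mid\mathrm{match}(x,e_1,(x_h,x_t).e_2)\mid\mathrm{share}(x,(x_1,x_2).e)$,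 with $\diamond\in\{+,-,*,\mathrm{div},\mathrm{mod},=,<>,<,>,\mathrm{and},\mathrm{or}\}$. A program fixes for each function identifier $f$ a body $e_f$ with a single parameter variable $y^f$. An environment $E$ is a finite map from variables to values. Cost semantics: fix arbitrary rational constants $K^{\mathrm{unit}},K^{\mathrm{bool}},K^{\mathrm{int}},K^{\mathrm{nil}},K^{\mathrm{var}},K^{\mathrm{op}},K^{\mathrm{app}},K^{\mathrm{let}},K^{\mathrm{cond}},K^{\mathrm{pair}},K^{\mathrm{matchP}},K^{\mathrm{cons}},K^{\mathrm{matchN}},K^{\mathrm{matchL}}$. The judgement $E\vdash^{q}_{q'} e\Downarrow v$ (all counters $q,q'$ occurring in derivations are in $\mathbb Q_{\ge0}$) is defined inductively: $E\vdash^{q+K^{c}}_{q}c\Downarrow c$ for constants $c\in\{(),\mathsf{true},\mathsf{false},n,\mathsf{nil}\}$ with the corresponding constant $K^{\mathrm{unit}},K^{\mathrm{bool}},K^{\mathrm{int}},K^{\mathrm{nil}}$; $E\vdash^{q+K^{\mathrm{var}}}_q x\Downarrow E(x)$ for $x\in\mathrm{dom}(E)$; $E\vdash^{q+K^{\mathrm{op}}}_q\mathrm{op}_\diamond(x_1,x_2)\Downarrow E(x_1)\diamond E(x_2)$; $E\vdash^{q+K^{\mathrm{pair}}}_q \mathrm{pair}(x_1,x_2)\Downarrow (E(x_1),E(x_2))$; $E\vdash^{q+K^{\mathrm{cons}}}_q\mathrm{cons}(x_h,x_t)\Downarrow[v_1,\dots,v_n]$ if $E(x_h)=v_1$ and $E(x_t)=[v_2,\dots,v_n]$;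 if $E[y^f\mapsto E(x)]\vdash^q_{q'}e_f\Downarrow v$ then $E\vdash^{q+K^{\mathrm{app}}}_{q'}\mathrm{app}(f,x)\Downarrow v$; if $E\vdash^{q-K^{\mathrm{let}}}_{q_1}e_1\Downarrow v_1$ and $E[x\mapsto v_1]\vdash^{q_1}_{q'}e_2\Downarrow v$ then $E\vdash^q_{q'}\mathrm{let}(x,e_1,x.e_2)\Downarrow v$; if $E(x)=\mathsf{true}$ and $E\vdash^{q-K^{\mathrm{cond}}}_{q'}e_t\Downarrow v$ (resp. $E(x)=\mathsf{false}$ and $E\vdash^{q-K^{\mathrm{cond}}}_{q'}e_f\Downarrow v$) then $E\vdash^q_{q'}\mathrm{if}(x,e_t,e_f)\Downarrow v$; if $E(x)=(v_1,v_2)$ and $E[x_1\mapsto v_1,x_2\mapsto v_2]\vdash^{q-K^{\mathrm{matchP}}}_{q'}e\Downarrow v$ then $E\vdash^q_{q'}\mathrm{match}(x,(x_1,x_2).e)\Downarrow v$; if $E(x)=\mathsf{nil}$ and $E\vdash^{q-K^{\mathrm{matchN}}}_{q'}e_1\Downarrow v$ then $E\vdash^q_{q'}\mathrm{match}(x,e_1,(x_h,x_t).e_2)\Downarrow v$; if $E(x)=[v_1,\dots,v_n]$ with $n\ge1$ and $E[x_h\mapsto v_1,x_t\mapsto[v_2,\dots,v_n]]\vdash^{q-K^{\mathrm{matchL}}}_{q'}e_2\Downarrow v$ then $E\vdash^q_{q'}\mathrm{match}(x,e_1,(x_h,x_t).e_2)\Downarrow v$; if $E(x)=v_1$ and $(E\setminus\{x\})[x_1\mapsto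 v_1,x_2\mapsto v_1]\vdash^q_{q'}e\Downarrow v$ then $E\vdash^q_{q'}\mathrm{share}(x,(x_1,x_2).e)\Downarrow v$. We write $E\vdash e\Downarrow v$ if $E\vdash^q_{q'}e\Downarrow v$ for some $q,q'$. Resource-annotated types: $A ::= \mathsf{unit}\mid\mathsf{bool}\mid\mathsf{int}\mid L^p(A)\mid A*A$ with $p\in\mathbb Q_{\ge0}$; $|A|$ denotes the base type obtained by erasing annotations. An annotated context $\Gamma$ is a finite map from variables to annotated types; $\Gamma_1,\Gamma_2$ denotes the union of contexts with disjoint domains (contexts are unordered). $\models E:\Gamma$ means $\models E(x):|\Gamma(x)|$ for all $x\in\mathrm{dom}(\Gamma)$. Potential: $\Phi(v:A)=0$ for $A\in\{\mathsf{unit},\mathsf{bool},\mathsf{int}\}$; $\Phi((v_1,v_2):A_1*A_2)=\Phi(v_1:A_1)+\Phi(v_2:A_2)$; $\Phi([v_1,\dots,v_n]:L^p(A))=n\cdot p+\sum_{i=1}^n\Phi(v_i:A)$; $\Phi_E(\Gamma)=\sum_{x\in\mathrm{dom}(\Gamma)}\Phi(E(x):\Gamma(x))$. Sharing relation: $\curlyvee(A\mid A,A)$ for $A\in\{\mathsf{unit},\mathsf{bool},\mathsf{int}\}$; $\curlyvee(A*B\mid A_1*B_1,A_2*B_2)$ if $\curlyvee(A\mid A_1,A_2)$ and $\curlyvee(B\mid B_1,B_2)$; $\curlyvee(L^p(A)\mid L^{p_1}(A_1),L^{p_2}(A_2))$ if $\curlyvee(A\mid A_1,A_2)$ and $p=p_1+p_2$.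 Subtyping $\preceq$: $A\preceq A$ for atoms; $L^{p_1}(A_1)\preceq L^{p_2}(A_2)$ if $A_1\preceq A_2$ and $p_1\le p_2$; $A_1*B_1\preceq A_2*B_2$ if $A_1\preceq A_2$ and $B_1\preceq B_2$. A signature $\Sigma$ maps function identifiers to nonempty sets of annotated function types $A_1\xrightarrow{q/q'}A_2$ ($q,q'\in\mathbb Q_{\ge0}$). Typing judgements $\Sigma;\Gamma\vdash^{q}_{q'}e:A$ with $q,q'\in\mathbb Q_{\ge0}$ (every annotation in a rule instance must be a nonnegative rational). Syntax-directed rules: $\Sigma;\emptyset\vdash^{K^{\mathrm{unit}}}_0():\mathsf{unit}$; $\Sigma;\emptyset\vdash^{K^{\mathrm{bool}}}_0 b:\mathsf{bool}$; $\Sigma;\emptyset\vdash^{K^{\mathrm{int}}}_0 n:\mathsf{int}$; $\Sigma;\emptyset\vdash^{K^{\mathrm{nil}}}_0\mathsf{nil}:L^p(A)$; $\Sigma;x:A\vdash^{K^{\mathrm{var}}}_0x:A$; $\Sigma;x_1:\mathsf{bool},x_2:\mathsf{bool}\vdash^{K^{\mathrm{op}}}_0\mathrm{op}_\diamond(x_1,x_2):\mathsf{bool}$ for $\diamond\in\{\mathrm{and},\mathrm{or}\}$; $\Sigma;x_1:\mathsf{int},x_2:\mathsf{int}\vdash^{K^{\mathrm{op}}}_0\mathrm{op}_\diamond(x_1,x_2):\mathsf{bool}$ for comparisons and $:\mathsf{int}$ for $+,-,*,\mathrm{div},\mathrm{mod}$; if $A_1\xrightarrow{q/q'}A_2\in\Sigma(f)$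 then $\Sigma;x:A_1\vdash^{q+K^{\mathrm{app}}}_{q'}\mathrm{app}(f,x):A_2$; from $\Sigma;\Gamma_1\vdash^{q-K^{\mathrm{let}}}_{q_1}e_1:A_1$ and $\Sigma;\Gamma_2,x:A_1\vdash^{q_1}_{q'}e_2:A_2$ infer $\Sigma;\Gamma_1,\Gamma_2\vdash^q_{q'}\mathrm{let}(x,e_1,x.e_2):A_2$; from $\Sigma;\Gamma\vdash^{q-K^{\mathrm{cond}}}_{q'}e_t:A$ and $\Sigma;\Gamma\vdash^{q-K^{\mathrm{cond}}}_{q'}e_f:A$ infer $\Sigma;\Gamma,x:\mathsf{bool}\vdash^q_{q'}\mathrm{if}(x,e_t,e_f):A$; $\Sigma;x_1:A_1,x_2:A_2\vdash^{K^{\mathrm{pair}}}_0\mathrm{pair}(x_1,x_2):A_1*A_2$; from $\Sigma;\Gamma,x_1:A_1,x_2:A_2\vdash^{q-K^{\mathrm{matchP}}}_{q'}e:A$ infer $\Sigma;\Gamma,x:A_1*A_2\vdash^q_{q'}\mathrm{match}(x,(x_1,x_2).e):A$; $\Sigma;x_h:A,x_t:L^p(A)\vdash^{p+K^{\mathrm{cons}}}_0\mathrm{cons}(x_h,x_t):L^p(A)$; from $\Sigma;\Gamma\vdash^{q-K^{\mathrm{matchN}}}_{q'}e_1:B$ and $\Sigma;\Gamma,x_h:A,x_t:L^p(A)\vdash^{q+p-K^{\mathrm{matchL}}}_{q'}e_2:B$ infer $\Sigma;\Gamma,x:L^p(A)\vdash^q_{q'}\mathrm{match}(x,e_1,(x_h,x_t).e_2):B$;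 from $\Sigma;\Gamma,x_1:A_1,x_2:A_2\vdash^q_{q'}e:B$ and $\curlyvee(A\mid A_1,A_2)$ infer $\Sigma;\Gamma,x:A\vdash^q_{q'}\mathrm{share}(x,(x_1,x_2).e):B$. Structural rules of the upper-bound system: (Relax) from $\Sigma;\Gamma\vdash^p_{p'}e:A$, $q\ge p$ and $q-p\ge q'-p'$ infer $\Sigma;\Gamma\vdash^q_{q'}e:A$; (Weakening) from $\Sigma;\Gamma\vdash^q_{q'}e:B$ infer $\Sigma;\Gamma,x:A\vdash^q_{q'}e:B$ for any $A$; (Subtype) from $\Sigma;\Gamma\vdash^q_{q'}e:A$ and $B\preceq A$ infer $\Sigma;\Gamma\vdash^q_{q'}e:B$; (Supertype) from $\Sigma;\Gamma,x:B\vdash^q_{q'}e:C$ and $B\preceq A$ infer $\Sigma;\Gamma,x:A\vdash^q_{q'}e:C$. The program is well-typed w.r.t. $\Sigma$ in this system if for every $f$ and every $A_1\xrightarrow{q/q'}A_2\in\Sigma(f)$, $\Sigma;y^f:A_1\vdash^q_{q'}e_f:A_2$ is derivable. *)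

(* Defs.v *)
From HB Require Import structures.
From mathcomp Require Import all_boot all_order all_algebra.
From Stdlib Require Import Permutation.
Set Implicit Arguments. Unset Strict Implicit. Unset Printing Implicit Defensive.
Import Order.TTheory GRing.Theory Num.Theory.
Local Open Scope ring_scope.

Definition var := nat.
Definition fid := nat.

Inductive bty :=
| TUnit | TBool | TInt | TList of bty | TPair of bty & bty.

Inductive value :=
| VUnit
| VBool of bool
| VInt of int
| VList of seq value
| VPair of value & value.

Fixpoint vty (T : bty) (v : value) {struct T} : bool :=
  match T, v with
  | TUnit, VUnit => true
  | TBool, VBool _ => true
  | TInt, VInt _ => true
  | TList T', VList vs => all (vty T') vs
  | TPair T1 T2, VPair v1 v2 => vty T1 v1 && vty T2 v2
  | _, _ => false
  end.

Inductive op :=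
| OAdd | OSub | OMul | ODiv | OMod
| OEq | ONeq | OLt | OGt
| OAnd | OOr.

(* expressions in let-normal form *)
Inductive expr :=
| EUnit
| ETrue
| EFalse
| EInt of int
| EVar of var
| EOp of op & var & var
| EApp of fid & var
| EIf of var & expr & expr
| ELet of var & expr & expr                    (* let(x, e1, x.e2) *)
| EPair of var & var
| EMatchP of var & var & var & expr            (* match(x,(x1,x2).e) *)
| ENil
| ECons of var & var
| EMatchL of var & expr & var & var & expr     (* match(x,e1,(xh,xt).e2) *)
| EShare of var & var & var & expr.            (* share(x,(x1,x2).e) *)

Record fundef := FunDef { fparam : var; fbody : expr }.
Definition prog := fid -> fundef.

(* Environments: finite maps from variables to values, represented as  *)
(* association lists (the most recent binding shadows older ones).     *)

Definition env := seq (var * value).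

Fixpoint lookup (E : env) (x : var) : option value :=
  match E with
  | [::] => None
  | (y, w) :: E' => if y == x then Some w else lookup E' x
  end.

Definition upd (E : env) (x : var) (v : value) : env := (x, v) :: E.
Definition rem_var (E : env) (x : var) : env := [seq yw <- E | yw.1 != x].

Definition op_sem (o : op) (v1 v2 : value) : option value :=
  match o, v1, v2 with
  | OAdd, VInt m, VInt n => Some (VInt (m + n))
  | OSub, VInt m, VInt n => Some (VInt (m - n))
  | OMul, VInt m, VInt n => Some (VInt (m * n))
  | ODiv, VInt m, VInt n => if n == 0 then None else Some (VInt (m %/ n)%Z)
  | OMod, VInt m, VInt n => if n == 0 then None else Some (VInt (m %% n)%Z)
  | OEq, VInt m, VInt n => Some (VBool (m == n))
  | ONeq, VInt m, VInt n => Some (VBool (m != n))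
  | OLt, VInt m, VInt n => Some (VBool (m < n))
  | OGt, VInt m, VInt n => Some (VBool (m > n))
  | OAnd, VBool a, VBool b => Some (VBool (a && b))
  | OOr, VBool a, VBool b => Some (VBool (a || b))
  | _, _, _ => None
  end.

Record costs := Costs {
  Kunit : rat; Kbool : rat; Kint : rat; Knil : rat; Kvar : rat; Kop : rat;
  Kapp : rat; Klet : rat; Kcond : rat; Kpair : rat; KmatchP : rat;
  Kcons : rat; KmatchN : rat; KmatchL : rat }.

Section Eval.
Variables (K : costs) (P : prog).

Inductive eval : env -> rat -> rat -> expr -> value -> Prop :=
| Ev_unit E q :
    0 <= q + Kunit K -> 0 <= q ->
    eval E (q + Kunit K) q EUnit VUnit
| Ev_true E q :
    0 <= q + Kbool K -> 0 <= q ->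
    eval E (q + Kbool K) q ETrue (VBool true)
| Ev_false E q :
    0 <= q + Kbool K -> 0 <= q ->
    eval E (q + Kbool K) q EFalse (VBool false)
| Ev_int E q n :
    0 <= q + Kint K -> 0 <= q ->
    eval E (q + Kint K) q (EInt n) (VInt n)
| Ev_nil E q :
    0 <= q + Knil K -> 0 <= q ->
    eval E (q + Knil K) q ENil (VList [::])
| Ev_var E q x v :
    0 <= q + Kvar K -> 0 <= q ->
    lookup E x = Some v ->
    eval E (q + Kvar K) q (EVar x) v
| Ev_op E q o x1 x2 v1 v2 v :
    0 <= q + Kop K -> 0 <= q ->
    lookup E x1 = Some v1 -> lookup E x2 = Some v2 -> op_sem o v1 v2 = Some v ->
    eval E (q + Kop K) q (EOp o x1 x2) v
| Ev_pair E q x1 x2 v1 v2 :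
    0 <= q + Kpair K -> 0 <= q ->
    lookup E x1 = Some v1 -> lookup E x2 = Some v2 ->
    eval E (q + Kpair K) q (EPair x1 x2) (VPair v1 v2)
| Ev_cons E q xh xt v1 vs :
    0 <= q + Kcons K -> 0 <= q ->
    lookup E xh = Some v1 -> lookup E xt = Some (VList vs) ->
    eval E (q + Kcons K) q (ECons xh xt) (VList (v1 :: vs))
| Ev_app E q q' f x vx v :
    0 <= q + Kapp K -> 0 <= q' ->
    lookup E x = Some vx ->
    eval (upd E (fparam (P f)) vx) q q' (fbody (P f)) v ->
    eval E (q + Kapp K) q' (EApp f x) v
| Ev_let E q q1 q' x e1 e2 v1 v :
    0 <= q -> 0 <= q' ->
    eval E (q - Klet K) q1 e1 v1 ->
    eval (upd E x v1) q1 q' e2 v ->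
    eval E q q' (ELet x e1 e2) v
| Ev_if_true E q q' x et ef v :
    0 <= q -> 0 <= q' ->
    lookup E x = Some (VBool true) ->
    eval E (q - Kcond K) q' et v ->
    eval E q q' (EIf x et ef) v
| Ev_if_false E q q' x et ef v :
    0 <= q -> 0 <= q' ->
    lookup E x = Some (VBool false) ->
    eval E (q - Kcond K) q' ef v ->
    eval E q q' (EIf x et ef) v
| Ev_matchP E q q' x x1 x2 e v1 v2 v :
    0 <= q -> 0 <= q' ->
    lookup E x = Some (VPair v1 v2) ->
    eval (upd (upd E x1 v1) x2 v2) (q - KmatchP K) q' e v ->
    eval E q q' (EMatchP x x1 x2 e) v
| Ev_matchN E q q' x e1 xh xt e2 v :
    0 <= q -> 0 <= q' ->
    lookup E x = Some (VList [::]) ->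
    eval E (q - KmatchN K) q' e1 v ->
    eval E q q' (EMatchL x e1 xh xt e2) v
| Ev_matchL E q q' x e1 xh xt e2 v1 vs v :
    0 <= q -> 0 <= q' ->
    lookup E x = Some (VList (v1 :: vs)) ->
    eval (upd (upd E xh v1) xt (VList vs)) (q - KmatchL K) q' e2 v ->
    eval E q q' (EMatchL x e1 xh xt e2) v
| Ev_share E q q' x x1 x2 e v1 v :
    0 <= q -> 0 <= q' ->
    lookup E x = Some v1 ->
    eval (upd (upd (rem_var E x) x1 v1) x2 v1) q q' e v ->
    eval E q q' (EShare x x1 x2 e) v.

End Eval.

Definition evaluates (K : costs) (P : prog) (E : env) (e : expr) (v : value) :=
  exists q q', eval K P E q q' e v.

Inductive aty :=
| AUnit | ABool | AInt | AList of rat & aty | APair of aty & aty.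

Fixpoint erase (A : aty) : bty :=
  match A with
  | AUnit => TUnit | ABool => TBool | AInt => TInt
  | AList _ B => TList (erase B)
  | APair A1 A2 => TPair (erase A1) (erase A2)
  end.

Fixpoint ann_nonneg (A : aty) : bool :=
  match A with
  | AList p B => (0 <= p) && ann_nonneg B
  | APair A1 A2 => ann_nonneg A1 && ann_nonneg A2
  | _ => true
  end.

(* potential  Phi(v : A)  (0 on ill-typed combinations, which never arise) *)
Fixpoint pot (A : aty) (v : value) {struct A} : rat :=
  match A, v with
  | AList p B, VList vs => (size vs)%:R * p + \sum_(w <- vs) pot B w
  | APair A1 A2, VPair v1 v2 => pot A1 v1 + pot A2 v2
  | _, _ => 0
  end.

(* annotated contexts: finite maps from variables to annotated types,
   represented as lists with pairwise distinct variables; contexts are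
   unordered, so rules are stated up to permutation. *)
Definition ctx := seq (var * aty).

Definition ctx_wf (G : ctx) : bool :=
  uniq (map fst G) && all (fun xa => ann_nonneg xa.2) G.

Definition env_typed (E : env) (G : ctx) : Prop :=
  forall xa, List.In xa G ->
  exists v, lookup E xa.1 = Some v /\ vty (erase xa.2) v.

Definition potE (E : env) (G : ctx) : rat :=
  \sum_(xa <- G) match lookup E xa.1 with Some v => pot xa.2 v | None => 0 end.

Inductive share_rel : aty -> aty -> aty -> Prop :=
| Sh_unit : share_rel AUnit AUnit AUnit
| Sh_bool : share_rel ABool ABool ABool
| Sh_int : share_rel AInt AInt AInt
| Sh_pair A B A1 B1 A2 B2 :
    share_rel A A1 A2 -> share_rel B B1 B2 ->
    share_rel (APair A B) (APair A1 B1) (APair A2 B2)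
| Sh_list p p1 p2 A A1 A2 :
    share_rel A A1 A2 -> p = p1 + p2 ->
    share_rel (AList p A) (AList p1 A1) (AList p2 A2).

Inductive subty : aty -> aty -> Prop :=
| Sub_unit : subty AUnit AUnit
| Sub_bool : subty ABool ABool
| Sub_int : subty AInt AInt
| Sub_list p1 p2 A1 A2 : subty A1 A2 -> p1 <= p2 -> subty (AList p1 A1) (AList p2 A2)
| Sub_pair A1 B1 A2 B2 : subty A1 A2 -> subty B1 B2 ->
    subty (APair A1 B1) (APair A2 B2).

Record fty := FTy { farg : aty; fq : rat; fq' : rat; fres : aty }.

Definition signature := fid -> fty -> Prop.

Definition sig_wf (S : signature) : Prop :=
  forall f, (exists ft, S f ft) /\
    forall ft, S f ft -> 0 <= fq ft /\ 0 <= fq' ft /\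
                         ann_nonneg (farg ft) /\ ann_nonneg (fres ft).

(* Every judgement in a derivation has nonnegative counters, a          *)
(* well-formed context and nonnegative annotations (jwf).               *)

Definition jwf (G : ctx) (q q' : rat) (A : aty) : Prop :=
  [/\ 0 <= q, 0 <= q', ctx_wf G & ann_nonneg A].

Definition arith_op (o : op) : bool :=
  match o with OAdd | OSub | OMul | ODiv | OMod => true | _ => false end.
Definition cmp_op (o : op) : bool :=
  match o with OEq | ONeq | OLt | OGt => true | _ => false end.
Definition bool_op (o : op) : bool :=
  match o with OAnd | OOr => true | _ => false end.

Section Typing.
Variables (K : costs) (S : signature).

Inductive typ : ctx -> rat -> rat -> expr -> aty -> Prop :=
| T_unit :
    jwf [::] (Kunit K) 0 AUnit -> typ [::] (Kunit K) 0 EUnit AUnit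
| T_true :
    jwf [::] (Kbool K) 0 ABool -> typ [::] (Kbool K) 0 ETrue ABool
| T_false :
    jwf [::] (Kbool K) 0 ABool -> typ [::] (Kbool K) 0 EFalse ABool
| T_int n :
    jwf [::] (Kint K) 0 AInt -> typ [::] (Kint K) 0 (EInt n) AInt
| T_nil p A :
    jwf [::] (Knil K) 0 (AList p A) -> typ [::] (Knil K) 0 ENil (AList p A)
| T_var x A :
    jwf [:: (x, A)] (Kvar K) 0 A -> typ [:: (x, A)] (Kvar K) 0 (EVar x) A
| T_opB o x1 x2 : bool_op o ->
    jwf [:: (x1, ABool); (x2, ABool)] (Kop K) 0 ABool ->
    typ [:: (x1, ABool); (x2, ABool)] (Kop K) 0 (EOp o x1 x2) ABool
| T_opC o x1 x2 : cmp_op o ->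
    jwf [:: (x1, AInt); (x2, AInt)] (Kop K) 0 ABool ->
    typ [:: (x1, AInt); (x2, AInt)] (Kop K) 0 (EOp o x1 x2) ABool
| T_opA o x1 x2 : arith_op o ->
    jwf [:: (x1, AInt); (x2, AInt)] (Kop K) 0 AInt ->
    typ [:: (x1, AInt); (x2, AInt)] (Kop K) 0 (EOp o x1 x2) AInt
| T_app f x ft : S f ft ->
    jwf [:: (x, farg ft)] (fq ft + Kapp K) (fq' ft) (fres ft) ->
    typ [:: (x, farg ft)] (fq ft + Kapp K) (fq' ft) (EApp f x) (fres ft)
| T_let G G1 G2 q q1 q' x e1 e2 A1 A2 :
    jwf G q q' A2 -> Permutation G (G1 ++ G2) ->
    typ G1 (q - Klet K) q1 e1 A1 ->
    typ ((x, A1) :: G2) q1 q' e2 A2 ->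
    typ G q q' (ELet x e1 e2) A2
| T_if G G0 q q' x et ef A :
    jwf G q q' A -> Permutation G ((x, ABool) :: G0) ->
    typ G0 (q - Kcond K) q' et A ->
    typ G0 (q - Kcond K) q' ef A ->
    typ G q q' (EIf x et ef) A
| T_pair x1 x2 A1 A2 :
    jwf [:: (x1, A1); (x2, A2)] (Kpair K) 0 (APair A1 A2) ->
    typ [:: (x1, A1); (x2, A2)] (Kpair K) 0 (EPair x1 x2) (APair A1 A2)
| T_matchP G G0 q q' x x1 x2 e A1 A2 A :
    jwf G q q' A -> Permutation G ((x, APair A1 A2) :: G0) ->
    typ ((x1, A1) :: (x2, A2) :: G0) (q - KmatchP K) q' e A ->
    typ G q q' (EMatchP x x1 x2 e) A
| T_cons xh xt p A :
    jwf [:: (xh, A); (xt, AList p A)] (p + Kcons K) 0 (AList p A) ->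
    typ [:: (xh, A); (xt, AList p A)] (p + Kcons K) 0 (ECons xh xt) (AList p A)
| T_matchL G G0 q q' x e1 xh xt e2 p A B :
    jwf G q q' B -> Permutation G ((x, AList p A) :: G0) ->
    typ G0 (q - KmatchN K) q' e1 B ->
    typ ((xh, A) :: (xt, AList p A) :: G0) (q + p - KmatchL K) q' e2 B ->
    typ G q q' (EMatchL x e1 xh xt e2) B
| T_share G G0 q q' x x1 x2 e A A1 A2 B :
    jwf G q q' B -> Permutation G ((x, A) :: G0) ->
    typ ((x1, A1) :: (x2, A2) :: G0) q q' e B ->
    share_rel A A1 A2 ->
    typ G q q' (EShare x x1 x2 e) B
| T_relax G p p' q q' e A :
    jwf G q q' A ->
    typ G p p' e A -> p <= q -> q' - p' <= q - p ->
    typ G q q' e A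
| T_weak G G0 q q' e x A B :
    jwf G q q' B -> Permutation G ((x, A) :: G0) ->
    typ G0 q q' e B ->
    typ G q q' e B
| T_sub G q q' e A B :
    jwf G q q' B ->
    typ G q q' e A -> subty B A ->
    typ G q q' e B
| T_super G G0 q q' e x A B C :
    jwf G q q' C -> Permutation G ((x, A) :: G0) ->
    typ ((x, B) :: G0) q q' e C -> subty B A ->
    typ G q q' e C.

End Typing.

Definition prog_typed (K : costs) (P : prog) (S : signature) : Prop :=
  forall f ft, S f ft ->
    typ K S [:: (fparam (P f), farg ft)] (fq ft) (fq' ft) (fbody (P f)) (fres ft).

(* Main.v *)
Require Import Defs.
From HB Require Import structures.
From mathcomp Require Import all_boot all_order all_algebra.
From Stdlib Require Import Permutation.
From mathcomp Require Import ring lra.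
Import Order.TTheory GRing.Theory Num.Theory.
Local Open Scope ring_scope.
Set Implicit Arguments. Unset Strict Implicit.

Lemma pot_ge0 A v : ann_nonneg A -> 0 <= pot A v.
Proof.
elim: A v => [| | |p B IH|A1 IH1 A2 IH2] [|b|n|vs|v1 v2] //=.
- move=> /andP[hp hB]. apply: addr_ge0; first by apply: mulr_ge0.
  by apply: sumr_ge0 => w _; apply: IH.
- move=> /andP[h1 h2]; apply: addr_ge0; [exact: IH1|exact: IH2].
Qed.

Lemma pot_sub B A v : subty B A -> pot B v <= pot A v.
Proof.
move=> H; elim: H v => [| | |p1 p2 A1 A2 _ IH hp|A1 B1 A2 B2 _ IH1 _ IH2] [|b|n|vs|v1 v2] //=.
- apply: lerD; first by apply: ler_wpM2l.
  by apply: ler_sum => w _; apply: IH.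
- by apply: lerD.
Qed.

Lemma pot_share A A1 A2 v : share_rel A A1 A2 -> pot A v = pot A1 v + pot A2 v.
Proof.
move=> H; elim: H v => [| | |C D C1 D1 C2 D2 _ IH1 _ IH2|p p1 p2 C C1 C2 _ IH ->] [|b|n|vs|v1 v2] //=; try by rewrite addr0.
- rewrite IH1 IH2; ring.
- rewrite (eq_bigr _ (fun w _ => IH w)) big_split /=. ring.
Qed.

Lemma erase_sub B A : subty B A -> erase B = erase A.
Proof. by elim => //= [p1 p2 C1 C2 _ -> _|C1 D1 C2 D2 _ -> _ ->]. Qed.

Lemma erase_share A A1 A2 : share_rel A A1 A2 -> erase A1 = erase A /\ erase A2 = erase A.
Proof. by elim => //= [C D C1 D1 C2 D2 _ [-> ->] _ [-> ->]|p p1 p2 C C1 C2 _ [-> ->] _]. Qed.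

Lemma potE_cons E xa G : potE E (xa :: G) =
  (match lookup E xa.1 with Some v => pot xa.2 v | None => 0 end) + potE E G.
Proof. by rewrite /potE big_cons. Qed.

Lemma potE_nil E : potE E [::] = 0.
Proof. by rewrite /potE big_nil. Qed.

Lemma potE_cons_some E x A G w : lookup E x = Some w ->
  potE E ((x, A) :: G) = pot A w + potE E G.
Proof. by move=> h; rewrite potE_cons /= h. Qed.

Lemma potE_cat E G1 G2 : potE E (G1 ++ G2) = potE E G1 + potE E G2.
Proof. by rewrite /potE big_cat. Qed.

Lemma potE_perm E G H : Permutation G H -> potE E G = potE E H.
Proof.
elim=> [|xa l l' _ IH|xa ya l|l l' l'' _ IH1 _ IH2]; rewrite ?potE_cons ?IH //.
- by rewrite addrCA.
- by rewrite IH1.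
Qed.

Lemma all_In (T : Type) (a : pred T) s x : all a s -> List.In x s -> a x.
Proof. elim: s => //= y s IH /andP[h1 h2] [<-|h] //; exact: IH. Qed.

Lemma potE_ge0 E G : all (fun xa => ann_nonneg xa.2) G -> 0 <= potE E G.
Proof.
elim: G => [|xa G IH] /=; first by rewrite potE_nil.
move=> /andP[h1 h2]; rewrite potE_cons; apply: addr_ge0; last exact: IH.
by case: (lookup E xa.1) => // w; apply: pot_ge0.
Qed.

Lemma potE_ext E1 E2 G : (forall xa, List.In xa G -> lookup E1 xa.1 = lookup E2 xa.1) ->
  potE E1 G = potE E2 G.
Proof.
elim: G => [|xa G IH] h; first by rewrite !potE_nil.
rewrite !potE_cons h /=; last by left.
by rewrite IH // => ya hy; apply: h; right.
Qed.

Lemma env_typed_perm E G H : Permutation G H -> env_typed E G -> env_typed E H.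
Proof.
move=> hp h xa hin; apply: h; apply: Permutation_in hin.
exact: Permutation_sym.
Qed.

Lemma env_typed_ext E1 E2 G : (forall xa, List.In xa G -> lookup E1 xa.1 = lookup E2 xa.1) ->
  env_typed E1 G -> env_typed E2 G.
Proof. by move=> h h1 xa hin; rewrite -h //; apply: h1. Qed.

Lemma env_typed_tail E xa G : env_typed E (xa :: G) -> env_typed E G.
Proof. by move=> h ya hy; apply: h; right. Qed.

Lemma env_typed_head E x A G : env_typed E ((x, A) :: G) ->
  exists v, lookup E x = Some v /\ vty (erase A) v.
Proof. by move=> h; apply: (h (x, A)); left. Qed.

Lemma env_typed_cons E x A G v : lookup E x = Some v -> vty (erase A) v ->
  env_typed E G -> env_typed E ((x, A) :: G).
Proof. by move=> h1 h2 h3 ya [<-|hy]; [exists v | apply: h3]. Qed.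

Lemma env_typed_app E G1 G2 : env_typed E (G1 ++ G2) -> env_typed E G1 /\ env_typed E G2.
Proof.
move=> h; split=> xa hin; apply: h; apply: List.in_or_app; [left|right]; exact: hin.
Qed.

Lemma perm_fst (G H : ctx) : Permutation G H -> perm_eq (map fst G) (map fst H).
Proof.
elim=> [|xa l l' _ IH|xa ya l|l l' l'' _ IH1 _ IH2] //=.
- by rewrite perm_cons.
- by rewrite (perm_catCA [:: ya.1] [:: xa.1] (map fst l)).
- exact: (seq.perm_trans IH1 IH2).
Qed.

Lemma In_fst (xa : var * aty) G : List.In xa G -> xa.1 \in map fst G.
Proof. elim: G => //= ya G IH [->|h]; rewrite in_cons ?eqxx // IH ?orbT //. Qed.

Lemma notin_ctx (x : var) (A : aty) (G0 : ctx) (xa : var * aty) : uniq (map fst ((x, A) :: G0)) -> List.In xa G0 -> xa.1 != x.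
Proof.
move=> /= /andP[hn _] hin; apply/eqP=> he; move: hn; rewrite -he.
by rewrite (In_fst hin).
Qed.

Lemma lookup_upd_neq E x v y : y != x -> lookup (upd E x v) y = lookup E y.
Proof. by move=> h /=; rewrite eq_sym (negbTE h). Qed.

Lemma lookup_upd_eq E x v : lookup (upd E x v) x = Some v.
Proof. by rewrite /= eqxx. Qed.

Lemma lookup_rem E x y : y != x -> lookup (rem_var E x) y = lookup E y.
Proof.
move=> h; elim: E => [|[z w] E IH] //=.
case: (eqVneq z x) => [->|hz] /=.
- by rewrite eq_sym (negbTE h).
- by rewrite IH.
Qed.


Lemma all_perm (T : Type) (a : pred T) (G H : seq T) : Permutation G H -> all a G -> all a H.
Proof.
elim=> [|x l l' _ IH|x y l|l l' l'' _ IH1 _ IH2] //=.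
- by move=> /andP[-> /IH].
- by move=> /and3P[-> -> ->].
- by move=> /IH1 /IH2.
Qed.

Lemma ctx_wf_perm (G H : ctx) : Permutation G H -> ctx_wf G -> ctx_wf H.
Proof.
move=> hp /andP[hu ha]; apply/andP; split.
- by rewrite -(perm_uniq (perm_fst hp)).
- exact: all_perm hp ha.
Qed.

Lemma opB_ty o v1 v2 v : bool_op o -> vty TBool v1 -> vty TBool v2 ->
  op_sem o v1 v2 = Some v -> vty TBool v.
Proof. by case: o => //= _; case: v1 => // b1; case: v2 => // b2 _ _ [<-]. Qed.

Lemma opC_ty o v1 v2 v : cmp_op o -> vty TInt v1 -> vty TInt v2 ->
  op_sem o v1 v2 = Some v -> vty TBool v.
Proof. by case: o => //= _; case: v1 => // b1; case: v2 => // b2 _ _ [<-]. Qed.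

Lemma opA_ty o v1 v2 v : arith_op o -> vty TInt v1 -> vty TInt v2 ->
  op_sem o v1 v2 = Some v -> vty TInt v.
Proof.
case: o => //= _; case: v1 => // b1; case: v2 => // b2 _ _; try by move=> [<-].
- by case: ifP => // _ [<-].
- by case: ifP => // _ [<-].
Qed.

Section Sound.
Variables (K : costs) (P : prog) (S : signature).
Hypothesis HS : sig_wf S.
Hypothesis HP : prog_typed K P S.

Lemma typ_jwf G q q' e A : typ K S G q q' e A -> jwf G q q' A.
Proof. by case=> *; assumption. Qed.

Definition good E G q q' e v A :=
  env_typed E G -> forall p r : rat, 0 <= p -> 0 <= r -> q + potE E G + r <= p ->
  exists p', 0 <= p' /\ eval K P E p p' e v /\ q' + pot A v + r <= p' /\ vty (erase A) v.

Lemma good_relax E G p0 p0' q q' e v A : good E G p0 p0' e v A ->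
  p0 <= q -> q' - p0' <= q - p0 -> good E G q q' e v A.
Proof.
move=> H h1 h2 Het p r hp hr hb.
have [||p' [hp' [hev [hb' hv]]]] := H Het p (r + (q - p0)) hp; try lra.
exists p'; split=> //; split=> //; split=> //; lra.
Qed.

Lemma good_weak E G G0 q q' e v x A B : jwf G q q' B -> Permutation G ((x, A) :: G0) ->
  good E G0 q q' e v B -> good E G q q' e v B.
Proof.
move=> [_ _ hwf _] hp H Het p r hpp hr hb.
have hwf' := ctx_wf_perm hp hwf.
move: (hwf') => /andP[_ /= /andP[hA hall]].
have Het' := env_typed_perm hp Het.
have [w [hw _]] := env_typed_head Het'.
rewrite (potE_perm E hp) (potE_cons_some _ _ hw) in hb.
have hw0 := pot_ge0 w hA.
have [||p' [hp' [hev [hb' hv]]]] := H (env_typed_tail Het') p (r + pot A w) hpp; try lra.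
exists p'; split=> //; split=> //; split=> //; lra.
Qed.

Lemma good_sub E G q q' e v A B : good E G q q' e v A -> subty B A -> good E G q q' e v B.
Proof.
move=> H hs Het p r hpp hr hb.
have [p' [hp' [hev [hb' hv]]]] := H Het p r hpp hr hb.
have := pot_sub v hs.
exists p'; split=> //; split=> //; split; first lra.
by rewrite (erase_sub hs).
Qed.

Lemma good_super E G G0 q q' e v x A B C : Permutation G ((x, A) :: G0) ->
  good E ((x, B) :: G0) q q' e v C -> subty B A -> good E G q q' e v C.
Proof.
move=> hp H hs Het p r hpp hr hb.
have Het' := env_typed_perm hp Het.
have [w [hw hvt]] := env_typed_head Het'.
rewrite (potE_perm E hp) (potE_cons_some _ _ hw) in hb.
have hle := pot_sub w hs.
have Het2 : env_typed E ((x, B) :: G0).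
  apply: env_typed_cons hw _ (env_typed_tail Het').
  by rewrite (erase_sub hs).
have [||p' [hp' [hev [hb' hv]]]] := H Het2 p (r + (pot A w - pot B w)) hpp; try lra.
  by rewrite (potE_cons_some _ _ hw); lra.
exists p'; split=> //; split=> //; split=> //; lra.
Qed.

Ltac struct_tac :=
  first
  [ by intros; discriminate
  | by intros ? ? ? ? ? ? ? ? ? sIH sh1 sh2 she; exact: (good_relax (sIH she) sh1 sh2)
  | by intros ? ? ? ? ? ? ? ? sj sp ? sIH she; exact: (good_weak sj sp (sIH she))
  | by intros ? ? ? ? ? ? ? ? sIH sh she; exact: (good_sub (sIH she) sh)
  | by intros ? ? ? ? ? ? ? ? ? ? sp ? sIH sh she; exact: (good_super sp (sIH she) sh) ].

Lemma sound E q0 q0' e v : eval K P E q0 q0' e v ->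
  forall G q q' e' A, typ K S G q q' e' A -> e' = e -> good E G q q' e v A.
Proof.
elim=> {E q0 q0' e v}
 [E q0 h1 h2 | E q0 h1 h2 | E q0 h1 h2 | E q0 n h1 h2 | E q0 h1 h2
 | E q0 x v h1 h2 hl
 | E q0 o x1 x2 v1 v2 v h1 h2 hl1 hl2 hop
 | E q0 x1 x2 v1 v2 h1 h2 hl1 hl2
 | E q0 xh xt v1 vs h1 h2 hl1 hl2
 | E q0 q0' f x vx v h1 h2 hl Hev IH
 | E q0 q1 q0' x e1 e2 v1 v h1 h2 Hev1 IH1 Hev2 IH2
 | E q0 q0' x et ef v h1 h2 hl Hev IH
 | E q0 q0' x et ef v h1 h2 hl Hev IH
 | E q0 q0' x x1 x2 e v1 v2 v h1 h2 hl Hev IH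
 | E q0 q0' x e1 xh xt e2 v h1 h2 hl Hev IH
 | E q0 q0' x e1 xh xt e2 v1 vs v h1 h2 hl Hev IH
 | E q0 q0' x x1 x2 e v1 v h1 h2 hl Hev IH]
 ? ? ? ? ? Ht; elim: Ht; try struct_tac.
- move=> hj _ Het p r hp hr hb; rewrite potE_nil in hb.
  exists (p - Kunit K); split; first lra.
  split; last (split; [rewrite /=; lra | done]).
  rewrite -{1}[p](subrK (Kunit K)); apply: Ev_unit; lra.
- move=> hj _ Het p r hp hr hb; rewrite potE_nil in hb.
  exists (p - Kbool K); split; first lra.
  split; last (split; [rewrite /=; lra | done]).
  rewrite -{1}[p](subrK (Kbool K)); apply: Ev_true; lra.
- move=> hj _ Het p r hp hr hb; rewrite potE_nil in hb.
  exists (p - Kbool K); split; first lra.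
  split; last (split; [rewrite /=; lra | done]).
  rewrite -{1}[p](subrK (Kbool K)); apply: Ev_false; lra.
- move=> n0 hj _ Het p r hp hr hb; rewrite potE_nil in hb.
  exists (p - Kint K); split; first lra.
  split; last (split; [rewrite /=; lra | done]).
  rewrite -{1}[p](subrK (Kint K)); apply: Ev_int; lra.
- move=> pa A hj _ Het p r hp hr hb; rewrite potE_nil in hb.
  exists (p - Knil K); split; first lra.
  split; last (split; [rewrite /= big_nil ?mulr0n ?mul0r; lra | done]).
  rewrite -{1}[p](subrK (Knil K)); apply: Ev_nil; lra.
- move=> x0 A hj [ex]; subst x0 => Het p r hp hr hb.
  have [w [hw hvt]] := env_typed_head Het.
  rewrite hl in hw; case: hw => ?; subst w.
  rewrite (potE_cons_some _ _ hl) potE_nil in hb.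
  case: hj => _ _ _ hA; have h0 := pot_ge0 v hA.
  exists (p - Kvar K); split; first lra.
  split; last (split; [lra | done]).
  rewrite -{1}[p](subrK (Kvar K)); apply: Ev_var => //; lra.
- move=> o0 y1 y2 ho hj [eo e1 e2]; subst o0 y1 y2 => Het p r hp hr hb.
  have [w1 [hw1 hv1]] := env_typed_head Het.
  have [w2 [hw2 hv2]] := env_typed_head (env_typed_tail Het).
  rewrite hl1 in hw1; rewrite hl2 in hw2; case: hw1 => ?; case: hw2 => ?; subst w1 w2.
  rewrite (potE_cons_some _ _ hl1) (potE_cons_some _ _ hl2) potE_nil /= in hb.
  exists (p - Kop K); split; first lra.
  split; last (split; [rewrite /=; lra | exact: opB_ty ho hv1 hv2 hop]).
  rewrite -{1}[p](subrK (Kop K)); apply: (Ev_op P _ _ hl1 hl2 hop); lra.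
- move=> o0 y1 y2 ho hj [eo e1 e2]; subst o0 y1 y2 => Het p r hp hr hb.
  have [w1 [hw1 hv1]] := env_typed_head Het.
  have [w2 [hw2 hv2]] := env_typed_head (env_typed_tail Het).
  rewrite hl1 in hw1; rewrite hl2 in hw2; case: hw1 => ?; case: hw2 => ?; subst w1 w2.
  rewrite (potE_cons_some _ _ hl1) (potE_cons_some _ _ hl2) potE_nil /= in hb.
  exists (p - Kop K); split; first lra.
  split; last (split; [rewrite /=; lra | exact: opC_ty ho hv1 hv2 hop]).
  rewrite -{1}[p](subrK (Kop K)); apply: (Ev_op P _ _ hl1 hl2 hop); lra.
- move=> o0 y1 y2 ho hj [eo e1 e2]; subst o0 y1 y2 => Het p r hp hr hb.
  have [w1 [hw1 hv1]] := env_typed_head Het.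
  have [w2 [hw2 hv2]] := env_typed_head (env_typed_tail Het).
  rewrite hl1 in hw1; rewrite hl2 in hw2; case: hw1 => ?; case: hw2 => ?; subst w1 w2.
  rewrite (potE_cons_some _ _ hl1) (potE_cons_some _ _ hl2) potE_nil /= in hb.
  exists (p - Kop K); split; first lra.
  split; last (split; [rewrite /=; lra | exact: opA_ty ho hv1 hv2 hop]).
  rewrite -{1}[p](subrK (Kop K)); apply: (Ev_op P _ _ hl1 hl2 hop); lra.
- move=> y1 y2 A1 A2 hj [e1 e2]; subst y1 y2 => Het p r hp hr hb.
  have [w1 [hw1 hv1]] := env_typed_head Het.
  have [w2 [hw2 hv2]] := env_typed_head (env_typed_tail Het).
  rewrite hl1 in hw1; rewrite hl2 in hw2; case: hw1 => ?; case: hw2 => ?; subst w1 w2.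
  rewrite (potE_cons_some _ _ hl1) (potE_cons_some _ _ hl2) potE_nil in hb.
  case: hj => _ _ _ /= /andP[hA1 hA2].
  have h3 := pot_ge0 v1 hA1; have h4 := pot_ge0 v2 hA2.
  exists (p - Kpair K); split; first lra.
  split; last (split; [rewrite /=; lra | by rewrite /= hv1 hv2]).
  rewrite -{1}[p](subrK (Kpair K)); apply: (Ev_pair P _ _ hl1 hl2); lra.
- move=> yh yt pa A hj [e1 e2]; subst yh yt => Het p r hp hr hb.
  have [w1 [hw1 hv1]] := env_typed_head Het.
  have [w2 [hw2 hv2]] := env_typed_head (env_typed_tail Het).
  rewrite hl1 in hw1; rewrite hl2 in hw2; case: hw1 => ?; case: hw2 => ?; subst w1 w2.
  rewrite (potE_cons_some _ _ hl1) (potE_cons_some _ _ hl2) potE_nil /= in hb.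
  case: hj => _ _ _ hAL.
  have h3 := pot_ge0 (VList vs) hAL; rewrite /= in h3.
  move: hAL => /= /andP[hpa hA].
  have h4 := pot_ge0 v1 hA.
  exists (p - Kcons K); split; first lra.
  split; last (split; [rewrite /= big_cons -addn1 natrD mulrDl mul1r; lra | by rewrite /= hv1]).
  rewrite -{1}[p](subrK (Kcons K)); apply: (Ev_cons P _ _ hl1 hl2); lra.
- move=> f0 x0 ft hS hj [ef ex]; subst f0 x0 => Het p r hp hr hb.
  have [w [hw hvt]] := env_typed_head Het.
  rewrite hl in hw; case: hw => ?; subst w.
  rewrite (potE_cons_some _ _ hl) potE_nil in hb.
  have [_ hft] := HS f. have [hq [hq' [ha hr']]] := hft ft hS.
  have h0 := pot_ge0 vx ha.
  have Het2 : env_typed (upd E (fparam (P f)) vx) [:: (fparam (P f), farg ft)].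
    by apply: env_typed_cons (lookup_upd_eq _ _ _) hvt _ => ? [].
  have [|||p' [hp' [hev [hb' hv]]]] := IH _ _ _ _ _ (HP hS) erefl Het2 (p - Kapp K) r; try lra.
    by rewrite (potE_cons_some _ _ (lookup_upd_eq _ _ _)) potE_nil; lra.
  exists p'; split=> //; split; last by split.
  rewrite -{1}[p](subrK (Kapp K)); apply: (Ev_app _ _ hl hev); lra.
- move=> G G1 G2 t t1 t' y d1 d2 A1 A2 hj hperm ht1 _ ht2 _ [ey ed1 ed2]; subst y d1 d2.
  move=> Het p r hp hr hb.
  have [Het1 Het2] := env_typed_app (env_typed_perm hperm Het).
  rewrite (potE_perm E hperm) potE_cat in hb.
  have [t10 _ hwf1 _] := typ_jwf ht1.
  have [_ _ hwf2 _] := typ_jwf ht2.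
  move: (hwf1) => /andP[_ hall1]. move: (hwf2) => /andP[hu2 /= /andP[hA1 hall2]].
  have hG1 := potE_ge0 E hall1. have hG2 := potE_ge0 E hall2.
  have [|||p1 [hp1 [hev1 [hb1 hv1]]]] := IH1 _ _ _ _ _ ht1 erefl Het1 (p - Klet K) (r + potE E G2); try lra.
  have hext : forall xa, List.In xa G2 -> lookup (upd E x v1) xa.1 = lookup E xa.1.
    move=> xa hin; apply: lookup_upd_neq; exact: (notin_ctx hu2 hin).
  have Het2' : env_typed (upd E x v1) ((x, A1) :: G2).
    apply: env_typed_cons (lookup_upd_eq _ _ _) hv1 _.
    by apply: env_typed_ext Het2 => xa hin; rewrite hext.
  have [|||p' [hp' [hev2 [hb2 hv2]]]] := IH2 _ _ _ _ _ ht2 erefl Het2' p1 r; try lra.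
    rewrite (potE_cons_some _ _ (lookup_upd_eq _ _ _)) (potE_ext hext); lra.
  exists p'; split=> //; split; last by split.
  exact: (Ev_let hp hp' hev1 hev2).
- move=> G G0 t t' y d1 d2 A hj hperm ht1 _ ht2 _ [ey ed1 ed2]; subst y d1 d2.
  move=> Het p r hp hr hb.
  have Het' := env_typed_perm hperm Het.
  rewrite (potE_perm E hperm) (potE_cons_some _ _ hl) /= in hb.
  have [t10 _ hwf1 _] := typ_jwf ht1. move: hwf1 => /andP[_ hall].
  have hG := potE_ge0 E hall.
  have [|||p' [hp' [hev [hb' hv]]]] := IH _ _ _ _ _ ht1 erefl (env_typed_tail Het') (p - Kcond K) r; try lra.
  exists p'; split=> //; split; last by split.
  by eapply Ev_if_true; eassumption.
- move=> G G0 t t' y d1 d2 A hj hperm ht1 _ ht2 _ [ey ed1 ed2]; subst y d1 d2.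
  move=> Het p r hp hr hb.
  have Het' := env_typed_perm hperm Het.
  rewrite (potE_perm E hperm) (potE_cons_some _ _ hl) /= in hb.
  have [t10 _ hwf1 _] := typ_jwf ht2. move: hwf1 => /andP[_ hall].
  have hG := potE_ge0 E hall.
  have [|||p' [hp' [hev [hb' hv]]]] := IH _ _ _ _ _ ht2 erefl (env_typed_tail Het') (p - Kcond K) r; try lra.
  exists p'; split=> //; split; last by split.
  by eapply Ev_if_false; eassumption.
- move=> G G0 t t' y y1 y2 d A1 A2 A hj hperm ht _ [ey ey1 ey2 ed]; subst y y1 y2 d.
  move=> Het p r hp hr hb.
  have Het' := env_typed_perm hperm Het.
  have [w [hw hvt]] := env_typed_head Het'.
  rewrite hl in hw; case: hw => ?; subst w.
  move: hvt => /= /andP[hv1 hv2].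
  rewrite (potE_perm E hperm) (potE_cons_some _ _ hl) /= in hb.
  have [t0 _ hwf _] := typ_jwf ht.
  move: (hwf) => /andP[hu hall].
  move: hall => /= /and3P[hA1 hA2 hall0].
  have h3 := pot_ge0 v1 hA1; have h4 := pot_ge0 v2 hA2; have h5 := potE_ge0 E hall0.
  have hu' : uniq (map fst ((x2, A2) :: G0)) by move: hu => /= /andP[_ ->].
  have h12 : x2 != x1 := notin_ctx hu (or_introl erefl).
  have hext : forall xa, List.In xa G0 ->
      lookup (upd (upd E x1 v1) x2 v2) xa.1 = lookup E xa.1.
    move=> xa hin; rewrite lookup_upd_neq ?(notin_ctx hu' hin) // lookup_upd_neq //.
    exact: (notin_ctx hu (or_intror hin)).
  have hlx1 : lookup (upd (upd E x1 v1) x2 v2) x1 = Some v1.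
    by rewrite lookup_upd_neq 1?eq_sym // lookup_upd_eq.
  have HetE : env_typed (upd (upd E x1 v1) x2 v2) ((x1, A1) :: (x2, A2) :: G0).
    apply: env_typed_cons hlx1 hv1 _.
    apply: env_typed_cons (lookup_upd_eq _ _ _) hv2 _.
    by apply: env_typed_ext (env_typed_tail Het') => xa hin; rewrite hext.
  have [|||p' [hp' [hev [hb' hv]]]] := IH _ _ _ _ _ ht erefl HetE (p - KmatchP K) r; try lra.
    rewrite (potE_cons_some _ _ hlx1) (potE_cons_some _ _ (lookup_upd_eq _ _ _)) (potE_ext hext); lra.
  exists p'; split=> //; split; last by split.
  by eapply Ev_matchP; eassumption.
- move=> G G0 t t' y d1 yh yt d2 pa A B hj hperm ht1 _ ht2 _ [ey ed1 eyh eyt ed2]; subst y d1 yh yt d2.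
  move=> Het p r hp hr hb.
  have Het' := env_typed_perm hperm Het.
  rewrite (potE_perm E hperm) (potE_cons_some _ _ hl) /= big_nil ?mulr0n ?mul0r in hb.
  have [t0 _ hwf _] := typ_jwf ht1. move: hwf => /andP[_ hall].
  have hG := potE_ge0 E hall.
  have [|||p' [hp' [hev [hb' hv]]]] := IH _ _ _ _ _ ht1 erefl (env_typed_tail Het') (p - KmatchN K) r; try lra.
  exists p'; split=> //; split; last by split.
  by eapply Ev_matchN; eassumption.
- move=> G G0 t t' y d1 yh yt d2 pa A B hj hperm ht1 _ ht2 _ [ey ed1 eyh eyt ed2]; subst y d1 yh yt d2.
  move=> Het p r hp hr hb.
  have Het' := env_typed_perm hperm Het.
  have [w [hw hvt]] := env_typed_head Het'.
  rewrite hl in hw; case: hw => ?; subst w.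
  move: hvt => /= /andP[hv1 hvs].
  rewrite (potE_perm E hperm) (potE_cons_some _ _ hl) /= big_cons -addn1 natrD mulrDl mul1r in hb.
  have [t0 _ hwf _] := typ_jwf ht2.
  move: (hwf) => /andP[hu hall].
  move: hall => /= /and3P[hA hAL hall0].
  have h3 := pot_ge0 v1 hA; have h4 := @pot_ge0 (AList pa A) (VList vs) hAL; have h5 := potE_ge0 E hall0.
  rewrite /= in h4.
  have hu' : uniq (map fst ((xt, AList pa A) :: G0)) by move: hu => /= /andP[_ ->].
  have h12 : xt != xh := notin_ctx hu (or_introl erefl).
  have hext : forall xa, List.In xa G0 ->
      lookup (upd (upd E xh v1) xt (VList vs)) xa.1 = lookup E xa.1.
    move=> xa hin; rewrite lookup_upd_neq ?(notin_ctx hu' hin) // lookup_upd_neq //.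
    exact: (notin_ctx hu (or_intror hin)).
  have hlx1 : lookup (upd (upd E xh v1) xt (VList vs)) xh = Some v1.
    by rewrite lookup_upd_neq 1?eq_sym // lookup_upd_eq.
  have HetE : env_typed (upd (upd E xh v1) xt (VList vs)) ((xh, A) :: (xt, AList pa A) :: G0).
    apply: env_typed_cons hlx1 hv1 _.
    apply: env_typed_cons (lookup_upd_eq _ _ _) (hvs : vty (erase (AList pa A)) (VList vs)) _.
    by apply: env_typed_ext (env_typed_tail Het') => xa hin; rewrite hext.
  have [|||p' [hp' [hev [hb' hv]]]] := IH _ _ _ _ _ ht2 erefl HetE (p - KmatchL K) r; try lra.
    rewrite (potE_cons_some _ _ hlx1) (potE_cons_some _ _ (lookup_upd_eq _ _ _)) (potE_ext hext) /=; lra.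
  exists p'; split=> //; split; last by split.
  by eapply Ev_matchL; eassumption.
- move=> G G0 t t' y y1 y2 d A A1 A2 B hj hperm ht _ hsh [ey ey1 ey2 ed]; subst y y1 y2 d.
  move=> Het p r hp hr hb.
  have Het' := env_typed_perm hperm Het.
  have [w [hw hvt]] := env_typed_head Het'.
  rewrite hl in hw; case: hw => ?; subst w.
  have hwfG : ctx_wf ((x, A) :: G0).
    by case: hj => _ _ hwf _; exact: ctx_wf_perm hperm hwf.
  move: (hwfG) => /andP[huG _].
  rewrite (potE_perm E hperm) (potE_cons_some _ _ hl) (pot_share v1 hsh) in hb.
  have [t0 _ hwf _] := typ_jwf ht.
  move: (hwf) => /andP[hu hall].
  have hu' : uniq (map fst ((x2, A2) :: G0)) by move: hu => /= /andP[_ ->].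
  have h12 : x2 != x1 := notin_ctx hu (or_introl erefl).
  have hext : forall xa, List.In xa G0 ->
      lookup (upd (upd (rem_var E x) x1 v1) x2 v1) xa.1 = lookup E xa.1.
    move=> xa hin; rewrite lookup_upd_neq ?(notin_ctx hu' hin) // lookup_upd_neq.
      by rewrite lookup_rem // (notin_ctx huG hin).
    exact: (notin_ctx hu (or_intror hin)).
  have hlx1 : lookup (upd (upd (rem_var E x) x1 v1) x2 v1) x1 = Some v1.
    by rewrite lookup_upd_neq 1?eq_sym // lookup_upd_eq.
  have [es1 es2] := erase_share hsh.
  have HetE : env_typed (upd (upd (rem_var E x) x1 v1) x2 v1) ((x1, A1) :: (x2, A2) :: G0).
    apply: env_typed_cons hlx1 _ _; first by rewrite es1.
    apply: env_typed_cons (lookup_upd_eq _ _ _) _ _; first by rewrite es2.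
    by apply: env_typed_ext (env_typed_tail Het') => xa hin; rewrite hext.
  have [|||p' [hp' [hev [hb' hv]]]] := IH _ _ _ _ _ ht erefl HetE p r; try lra.
    rewrite (potE_cons_some _ _ hlx1) (potE_cons_some _ _ (lookup_upd_eq _ _ _)) (potE_ext hext); lra.
  exists p'; split=> //; split; last by split.
  by eapply Ev_share; eassumption.
Qed.

End Sound.

Unset Implicit Arguments.

Theorem theorem4 (K : costs) (P : prog) (S : signature) :
  sig_wf S -> prog_typed K P S ->
  forall (E : env) (G : ctx) (e : expr) (v : value) (q q' : rat) (A : aty),
    env_typed E G ->
    evaluates K P E e v ->
    typ K S G q q' e A ->
    forall p r : rat, 0 <= p -> 0 <= r -> q + potE E G + r <= p ->
    exists p' : rat, 0 <= p' /\ eval K P E p p' e v /\ q' + pot A v + r <= p'.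
Proof.
move=> HS HP E G e v q q' A Het [q0 [q0' Hev]] Ht p r hp hr hb.
have [p' [h1 [h2 [h3 _]]]] := sound HS HP Hev Ht erefl Het hp hr hb.
by exists p'.
Qed.
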